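(* Fix $L\ge20$. For any pattern $(\mathbf a,\mathbf e)$ there exists $S\subseteq V(\Gamma)$ such that $p((\mathbf a,\mathbf e)_S)\ge p(\mathbf a,\mathbf e)-150L\sqrt d$ and, for every $(i,w)\in S$, \[\sum_{(i',w')\in N_\Gamma(i,w)\cap S}\frac{a_{i,w}a_{i',w'}}{n}\,b(\epsilon_{i,w,i',w'})\ge\frac L{10}\,a_{i,w}\log\Big(\frac{en}{a_{i,w}}\Big),\] where the right side is interpreted as $0$ when $a_{i,w}=0$.
   Context: $d\ge2$, $H$ is a $d$-regular graph on $[h]$. $D^{>0}=\{2^k/\sqrt{nh}:k\in\mathbb{Z},k\ge0\}$; $\Gamma$ is the graph on $[h]\times D^{>0}$ with $(i,w)\sim_\Gamma(i',w')$ iff $ii'\in E(H)$ and $w/w'\in(d^{-1/2},d^{1/2})$. A pattern is $(\mathbf a,\mathbf e)$: nonnegative integers $a_{i,w}$ with $\sum_wa_{i,w}\le n$ for each $i$, $\sum w^2a_{i,w}\le10$, some $w_0\in D^{>0}$ with $a_{i,w}=0$ unless $w_0\le w\le dw_0$; integers $e_{i,w,i',w'}$ for edges of $\Gamma$ (symmetric) with $0\le e\le\min(a_{i,w},a_{i',w'})$. Potency $p(\mathbf a,\mathbf e)=|\sum_{(i,w)(i',w')\in E(\Gamma)}ww'(e_{i,w,i',w'}-a_{i,w}a_{i',w'}/n)|$. Sub-pattern $(\mathbf a,\mathbf e)_S$: keep $a_{i,w}$ for $(i,w)\in S$ (else $0$) and $e$ on edges inside $S$ (else $0$). $\epsilon_{i,w,i',w'}=e_{i,w,i',w'}n/(a_{i,w}a_{i',w'})-1$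 if $a_{i,w},a_{i',w'}\ne0$, and $=1$ otherwise. $b(\epsilon)=(1+\epsilon)\log(1+\epsilon)-\epsilon$ for $\epsilon>-1$, $b(-1)=1$. *)

(* Defs.v *)
From Stdlib Require Import Reals Lra Lia List Arith Bool.
Import ListNotations.
Open Scope R_scope.

Fixpoint rsum (m : nat) (f : nat -> R) : R :=
  match m with
  | O => 0
  | S m' => rsum m' f + f m'
  end.

Definition d_regular (h d : nat) (adjH : nat -> nat -> bool) : Prop :=
  (forall i j, adjH i j = adjH j i) /\
  (forall i, adjH i i = false) /\
  (forall i j, adjH i j = true -> (i < h)%nat /\ (j < h)%nat) /\
  (forall i, (i < h)%nat -> length (filter (adjH i) (seq 0 h)) = d).

(* The weight with index k : nat is 2^k / sqrt(n h), an element of D^{>0}. *)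
Definition weight (n h k : nat) : R := 2 ^ k / sqrt (INR n * INR h).

Definition Rltb (x y : R) : bool := if Rlt_dec x y then true else false.

Definition gadj (n h d : nat) (adjH : nat -> nat -> bool) (i k i' k' : nat) : bool :=
  adjH i i' &&
  Rltb (/ sqrt (INR d)) (weight n h k / weight n h k') &&
  Rltb (weight n h k / weight n h k') (sqrt (INR d)).

(* a i k = a_{i,w_k}; e i k i' k' = e_{i,w_k,i',w_k'}.
   k0 indexes the weight w0 of the definition; B = k0 + d + 1 bounds the
   support in k (2^k <= d 2^k0 forces k < k0 + d). *)
Definition is_pattern (n h d : nat) (adjH : nat -> nat -> bool) (k0 : nat)
  (a : nat -> nat -> nat) (e : nat -> nat -> nat -> nat -> nat) : Prop :=
  (forall i k, (h <= i)%nat -> a i k = O) /\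
  (forall i k, (i < h)%nat ->
     ~ (weight n h k0 <= weight n h k <= INR d * weight n h k0) -> a i k = O) /\
  (forall i, (i < h)%nat -> (rsum (k0 + d + 1) (fun k => INR (a i k)) <= INR n)) /\
  (rsum h (fun i => rsum (k0 + d + 1)
     (fun k => (weight n h k) ^ 2 * INR (a i k))) <= 10) /\
  (forall i k i' k', gadj n h d adjH i k i' k' = true ->
     e i k i' k' = e i' k' i k /\ (e i k i' k' <= Nat.min (a i k) (a i' k'))%nat).

(* Potency: sum over (unordered) edges of Gamma = half the sum over ordered
   adjacent pairs; all terms vanish unless k,k' < B. *)
Definition potency (n h d : nat) (adjH : nat -> nat -> bool) (B : nat)
  (a : nat -> nat -> nat) (e : nat -> nat -> nat -> nat -> nat) : R :=
  Rabs (/ 2 * rsum h (fun i => rsum B (fun k => rsum h (fun i' => rsum B (fun k' =>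
    if gadj n h d adjH i k i' k' then
      weight n h k * weight n h k' *
      (INR (e i k i' k') - INR (a i k) * INR (a i' k') / INR n)
    else 0))))).

Definition sub_a (S : nat -> nat -> bool) (a : nat -> nat -> nat) : nat -> nat -> nat :=
  fun i k => if S i k then a i k else O.
Definition sub_e (S : nat -> nat -> bool) (e : nat -> nat -> nat -> nat -> nat)
  : nat -> nat -> nat -> nat -> nat :=
  fun i k i' k' => if S i k && S i' k' then e i k i' k' else O.

Definition eps (n : nat) (a : nat -> nat -> nat) (e : nat -> nat -> nat -> nat -> nat)
  (i k i' k' : nat) : R :=
  if negb (Nat.eqb (a i k) 0) && negb (Nat.eqb (a i' k') 0) then
    INR (e i k i' k') * INR n / (INR (a i k) * INR (a i' k')) - 1
  else 1.

Definition bfun (x : R) : R :=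
  if Rlt_dec (-1) x then (1 + x) * ln (1 + x) - x else 1.

(* Main.v *)
Require Import Defs.
From Stdlib Require Import Reals Lra Lia List Arith Bool Classical.
Import ListNotations.
Open Scope R_scope.

Lemma rsum_ext m f g : (forall j, (j < m)%nat -> f j = g j) -> rsum m f = rsum m g.
Proof. induction m; simpl; intros H; auto. rewrite IHm by (intros; apply H; lia). rewrite H by lia. auto. Qed.

Lemma rsum_le m f g : (forall j, (j < m)%nat -> f j <= g j) -> rsum m f <= rsum m g.
Proof. induction m; simpl; intros H; [lra|]. assert (H1:=H m ltac:(lia)). assert (rsum m f <= rsum m g) by (apply IHm; intros; apply H; lia). lra. Qed.

Lemma rsum_plus m f g : rsum m (fun j => f j + g j) = rsum m f + rsum m g.
Proof. induction m; simpl; [lra|]. rewrite IHm. lra. Qed.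

Lemma rsum_minus m f g : rsum m (fun j => f j - g j) = rsum m f - rsum m g.
Proof. induction m; simpl; [lra|]. rewrite IHm. lra. Qed.

Lemma rsum_scal m c f : rsum m (fun j => c * f j) = c * rsum m f.
Proof. induction m; simpl; [lra|]. rewrite IHm. lra. Qed.

Lemma rsum_zero m f : (forall j, (j < m)%nat -> f j = 0) -> rsum m f = 0.
Proof. intros H. rewrite (rsum_ext m f (fun _ => 0)) by auto. induction m; simpl; auto. rewrite IHm; [lra|]. intros; apply H; lia. Qed.

Lemma rsum_nonneg m f : (forall j, (j < m)%nat -> 0 <= f j) -> 0 <= rsum m f.
Proof. intros H. replace 0 with (rsum m (fun _ => 0)). apply rsum_le; auto. apply rsum_zero; auto. Qed.

Lemma rsum_abs m f : Rabs (rsum m f) <= rsum m (fun j => Rabs (f j)).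
Proof. induction m; simpl. rewrite Rabs_R0; lra. eapply Rle_trans. apply Rabs_triang. lra. Qed.

Lemma rsum_single_le m f j0 : (forall j, (j < m)%nat -> 0 <= f j) -> (j0 < m)%nat -> f j0 <= rsum m f.
Proof. induction m; simpl; intros H Hj; [lia|]. destruct (Nat.eq_dec j0 m).
 subst. assert (0 <= rsum m f) by (apply rsum_nonneg; intros; apply H; lia). lra.
 assert (f j0 <= rsum m f) by (apply IHm; [intros; apply H; lia| lia]). assert (0 <= f m) by (apply H; lia). lra. Qed.

Lemma rsum_pick m (g : nat -> R) j0 : (j0 < m)%nat ->
  rsum m (fun j => if Nat.eqb j j0 then g j else 0) = g j0.
Proof. induction m; simpl; intros H; [lia|]. destruct (Nat.eq_dec j0 m).
 subst. rewrite Nat.eqb_refl. rewrite rsum_zero. lra. intros j Hj. destruct (Nat.eqb_spec j m); [lia|auto].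
 destruct (Nat.eqb_spec m j0); [lia|]. rewrite IHm by lia. lra. Qed.

Lemma rsum_tail m p f : (forall j, (m <= j)%nat -> (j < m + p)%nat -> f j = 0) -> rsum (m + p) f = rsum m f.
Proof. induction p; intros H. rewrite Nat.add_0_r; auto. rewrite Nat.add_succ_r. simpl. rewrite IHp. rewrite H by lia. lra. intros; apply H; lia. Qed.

Lemma rsum_range m1 m2 f : (forall j, (m1 <= j)%nat -> f j = 0) -> (forall j, (m2 <= j)%nat -> f j = 0) -> rsum m1 f = rsum m2 f.
Proof. intros H1 H2. destruct (Nat.le_ge_cases m1 m2).
 replace m2 with (m1 + (m2 - m1))%nat by lia. rewrite rsum_tail. auto. intros; apply H1; lia.
 replace m1 with (m2 + (m1 - m2))%nat by lia. rewrite rsum_tail. auto. intros; apply H2; lia. Qed.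

Lemma rsum_shift m f : rsum (S m) f = f O + rsum m (fun j => f (S j)).
Proof. induction m. simpl; lra. change (rsum (S (S m)) f) with (rsum (S m) f + f (S m)). rewrite IHm. simpl. lra. Qed.

Lemma rsum_swap m p (f : nat -> nat -> R) : rsum m (fun i => rsum p (fun j => f i j)) = rsum p (fun j => rsum m (fun i => f i j)).
Proof. induction m; simpl. rewrite rsum_zero; auto. rewrite IHm. rewrite <- rsum_plus. auto. Qed.

Lemma rsum_count m (p : nat -> bool) : rsum m (fun i => if p i then 1 else 0) = INR (length (filter p (seq 0 m))).
Proof. induction m. simpl; auto. change (rsum (S m) (fun i => if p i then 1 else 0)) with (rsum m (fun i => if p i then 1 else 0) + (if p m then 1 else 0)). rewrite seq_S, filter_app, length_app. rewrite plus_INR. rewrite IHm. simpl. destruct (p m); simpl; lra. Qed.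

Lemma CS_sq m x y : (rsum m (fun j => x j * y j))^2 <= rsum m (fun j => x j ^ 2) * rsum m (fun j => y j ^ 2).
Proof. induction m. simpl. lra.
 change (rsum (S m) (fun j => x j * y j)) with (rsum m (fun j => x j * y j) + x m * y m).
 change (rsum (S m) (fun j => x j ^ 2)) with (rsum m (fun j => x j ^ 2) + x m ^ 2).
 change (rsum (S m) (fun j => y j ^ 2)) with (rsum m (fun j => y j ^ 2) + y m ^ 2).
 set (S := rsum m (fun j => x j * y j)) in *. set (A := rsum m (fun j => x j ^ 2)) in *. set (B := rsum m (fun j => y j ^ 2)) in *.
 assert (HA: 0 <= A) by (apply rsum_nonneg; intros; nra). assert (HB: 0 <= B) by (apply rsum_nonneg; intros; nra).
 set (u := x m) in *. set (v := y m) in *.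
 assert (Hk: 2 * S * (u * v) <= A * v^2 + B * u^2).
 { assert (H1: S^2 * (u^2*v^2) <= A * B * (u^2 * v^2)) by (apply Rmult_le_compat_r; [apply Rmult_le_pos; apply pow2_ge_0 | exact IHm]).
   assert (H2: 4 * (A*B*(u^2*v^2)) <= (A*v^2 + B*u^2)^2) by (assert (0 <= (A*v^2 - B*u^2)^2) by apply pow2_ge_0; nra).
   assert (H0: (2*S*(u*v))^2 <= (A*v^2 + B*u^2)^2) by nra.
   assert (0 <= A*v^2 + B*u^2) by nra.
   destruct (Rle_dec (2*S*(u*v)) 0); [lra|]. nra. }
 assert (E1: (S + u*v)^2 = S^2 + 2*S*(u*v) + u^2*v^2) by ring. assert (E2: (A+u^2)*(B+v^2) = A*B + (A*v^2 + B*u^2) + u^2*v^2) by ring. lra. Qed.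

Lemma CS m x y : rsum m (fun j => x j * y j) <= sqrt (rsum m (fun j => x j ^ 2)) * sqrt (rsum m (fun j => y j ^ 2)).
Proof. rewrite <- sqrt_mult_alt by (apply rsum_nonneg; intros; nra).
 destruct (Rle_dec (rsum m (fun j => x j * y j)) 0). pose proof (sqrt_pos (rsum m (fun j => x j ^ 2) * rsum m (fun j => y j ^ 2))); lra.
 apply Rsqr_incr_0_var. rewrite Rsqr_sqrt. unfold Rsqr. pose proof (CS_sq m x y). nra.
 apply Rmult_le_pos; apply rsum_nonneg; intros; nra. apply sqrt_pos. Qed.

Lemma Rdiv_le_0_compat x y : 0 <= x -> 0 < y -> 0 <= x / y.
Proof. intros. unfold Rdiv. apply Rmult_le_pos; auto. left; apply Rinv_0_lt_compat; auto. Qed.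

Lemma ln_le_sub1 x : 0 < x -> ln x <= x - 1.
Proof. intros Hx. pose proof (exp_ineq1_le (ln x)). rewrite exp_ln in H; lra. Qed.

Lemma ln_ge_1minv x : 0 < x -> 1 - / x <= ln x.
Proof. intros Hx. pose proof (ln_le_sub1 (/ x) ltac:(apply Rinv_0_lt_compat; lra)). rewrite ln_Rinv in H by lra. lra. Qed.

Lemma bfun_sq x : -1 < x -> (sqrt (1+x) - 1)^2 <= bfun x.
Proof. intros Hx. unfold bfun. destruct (Rlt_dec (-1) x) as [_|]; [|lra].
 set (y := 1 + x). assert (Hy: 0 < y) by (unfold y; lra).
 set (r := sqrt y). assert (Hr: 0 < r) by (apply sqrt_lt_R0; auto).
 assert (Hrr: r * r = y) by (apply sqrt_sqrt; lra).
 assert (Hl: ln y = 2 * ln r) by (rewrite <- Hrr, ln_mult; lra).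
 pose proof (ln_ge_1minv r Hr).
 assert (y * ln y >= 2 * y * (1 - / r)) by (rewrite Hl; assert (0 <= y) by lra; nra).
 assert (2 * y * (1 - / r) = 2 * r * r - 2 * r) by (rewrite <- Hrr; field; lra).
 assert (x = y - 1) by (unfold y; lra). assert ((r-1)^2 = r*r - 2*r + 1) by ring. lra. Qed.

Lemma bfun_nonneg x : -1 <= x -> 0 <= bfun x.
Proof. intros Hx. destruct (Rle_lt_or_eq_dec _ _ Hx).
 pose proof (bfun_sq x r). pose proof (pow2_ge_0 (sqrt (1 + x) - 1)). lra. subst. unfold bfun. destruct (Rlt_dec (-1) (-1)); lra. Qed.

Lemma bfun_quad x : -1 <= x -> x ^ 2 <= 4 * Rmax 1 (1 + x) * bfun x.
Proof. intros Hx. destruct (Rle_lt_or_eq_dec _ _ Hx).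
 2:{ subst. unfold bfun. destruct (Rlt_dec (-1) (-1)); [lra|]. unfold Rmax; destruct (Rle_dec 1 (1 + -1)); lra. }
 pose proof (bfun_sq x r) as Hb.
 set (r0 := sqrt (1 + x)) in *. assert (H0: 0 <= r0) by apply sqrt_pos.
 assert (Hrr: r0 * r0 = 1 + x) by (apply sqrt_sqrt; lra).
 assert (Hx2: x ^ 2 = (r0 - 1)^2 * (r0 + 1)^2) by (replace x with (r0*r0 - 1) by lra; ring).
 assert (Hm: (r0 + 1)^2 <= 4 * Rmax 1 (1 + x)).
 { unfold Rmax. destruct (Rle_dec 1 (1+x)); nra. }
 rewrite Hx2. assert (0 <= (r0-1)^2) by apply pow2_ge_0. assert (0 <= (r0+1)^2) by apply pow2_ge_0.
 apply Rle_trans with (bfun x * (r0+1)^2). apply Rmult_le_compat_r; lra.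
 rewrite Rmult_comm. apply Rmult_le_compat_r; lra. Qed.

Lemma bfun_big x : -1 < x -> 2 <= ln (1 + x) -> (1 + x) * ln (1 + x) <= 2 * bfun x.
Proof. intros Hx Hl. unfold bfun. destruct (Rlt_dec (-1) x); [|lra]. nra. Qed.

Lemma ln_le x y : 0 < x -> x <= y -> ln x <= ln y.
Proof. intros. destruct (Rle_lt_or_eq_dec _ _ H0). left; apply ln_increasing; auto. subst; lra. Qed.

Definition mfun (z : R) : R := Rmin z (/ sqrt z).
Definition psi (x : R) : R := if Rle_dec x 1 then 7 - 2 * x else 7 / 2 / sqrt x.

Lemma psi_step x : 0 < x -> mfun x + psi (2 * x) <= psi x.
Proof. intros Hx. unfold psi, mfun.
 assert (Hm1: Rmin x (/ sqrt x) <= x) by apply Rmin_l.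
 assert (Hm2: Rmin x (/ sqrt x) <= / sqrt x) by apply Rmin_r.
 destruct (Rle_dec x 1); destruct (Rle_dec (2*x) 1).
 - lra.
 - assert (1 < sqrt (2*x)). { rewrite <- sqrt_1. apply sqrt_lt_1; lra. }
   assert (7/2/sqrt(2*x) <= 7/2). { unfold Rdiv. rewrite Rmult_assoc. assert (/ sqrt (2*x) < 1). { rewrite <- Rinv_1. apply Rinv_lt_contravar; lra. }
     assert (0 < / sqrt (2*x)) by (apply Rinv_0_lt_compat; lra). nra. }
   lra.
 - lra.
 - assert (Hs: sqrt (2 * x) = sqrt 2 * sqrt x) by (apply sqrt_mult; lra).
   assert (Hsx: 0 < sqrt x) by (apply sqrt_lt_R0; lra).
   assert (H2: 1.4 <= sqrt 2). { rewrite <- (sqrt_square 1.4) by lra. apply sqrt_le_1; lra. }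
   rewrite Hs. set (s := sqrt x) in *.
   assert (E: 7/2/(sqrt 2 * s) = (7/(2*sqrt 2)) * /s) by (field; lra).
   assert (E2: 7/2/s = 7/2 * /s) by (field; lra).
   assert (E3: 7/(2*sqrt 2) <= 5/2). { apply Rmult_le_reg_r with (2 * sqrt 2). lra. unfold Rdiv. rewrite Rmult_assoc, Rinv_l by lra. lra. }
   assert (0 < / s) by (apply Rinv_0_lt_compat; lra).
   rewrite E, E2. nra. Qed.

Lemma psi_le7 x : 0 < x -> psi x <= 7.
Proof. intros Hx. unfold psi. destruct (Rle_dec x 1). lra.
 assert (1 < sqrt x). { rewrite <- sqrt_1. apply sqrt_lt_1; lra. }
 unfold Rdiv. assert (/ sqrt x < 1). { rewrite <- Rinv_1. apply Rinv_lt_contravar; lra. }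
 assert (0 < / sqrt x) by (apply Rinv_0_lt_compat; lra). nra. Qed.

Lemma psi_nonneg x : 0 < x -> 0 <= psi x.
Proof. intros Hx. unfold psi. destruct (Rle_dec x 1). lra.
 assert (0 < sqrt x) by (apply sqrt_lt_R0; lra). unfold Rdiv. assert (0 < / sqrt x) by (apply Rinv_0_lt_compat; lra). nra. Qed.

Lemma msum_psi B : forall x, 0 < x -> rsum B (fun k => mfun (2 ^ k * x)) <= psi x.
Proof. induction B; intros x Hx. simpl. apply psi_nonneg; auto.
 rewrite rsum_shift. simpl pow. rewrite Rmult_1_l.
 rewrite (rsum_ext B _ (fun j => mfun (2 ^ j * (2 * x)))).
 pose proof (IHB (2*x) ltac:(lra)). pose proof (psi_step x Hx). lra.
 intros j _. simpl pow. f_equal. ring. Qed.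

Lemma mfun_sum B x : 0 < x -> rsum B (fun k => mfun (2 ^ k * x)) <= 7.
Proof. intros. pose proof (msum_psi B x H). pose proof (psi_le7 x H). lra. Qed.

Definition qf (t : R) : R := sqrt (sqrt t).

Lemma qf_pow4 t : 0 <= t -> qf t ^ 4 = t.
Proof. intros. unfold qf. assert (sqrt (sqrt t) * sqrt (sqrt t) = sqrt t) by (apply sqrt_sqrt, sqrt_pos).
 assert (sqrt t * sqrt t = t) by (apply sqrt_sqrt; auto). simpl. nra. Qed.

Lemma qf_bounds t : 0 <= t <= 1 -> 0 <= qf t <= 1.
Proof. intros. unfold qf. split. apply sqrt_pos. rewrite <- sqrt_1. apply sqrt_le_1_alt. rewrite <- sqrt_1. apply sqrt_le_1_alt. lra. Qed.

Lemma point_bound w q W : 0 < w -> 0 <= q <= 1 -> 0 < W -> w^2 * q^4 <= W^2 ->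
  w * q^3 <= W * mfun (w / W).
Proof. intros Hw Hq HW H. unfold mfun.
 assert (A1: w * q^3 <= W * (w / W)). { replace (W * (w/W)) with w by (field; lra). assert (q^3 <= 1). { assert (q^3 <= 1^3) by (apply pow_incr; lra). lra. } nra. }
 assert (Hwq: w * q^2 <= W). { assert (0 <= w * q^2) by nra. assert ((w*q^2)^2 <= W^2) by nra. nra. }
 assert (A2: w * q^3 <= W * / sqrt (w / W)).
 { assert (Hs: 0 < sqrt (w / W)) by (apply sqrt_lt_R0; unfold Rdiv; apply Rmult_lt_0_compat; auto; apply Rinv_0_lt_compat; auto).
   apply Rsqr_incr_0_var. 2:{ assert (0 < / sqrt (w/W)) by (apply Rinv_0_lt_compat; auto). nra. }
   unfold Rsqr. replace (W * / sqrt (w / W) * (W * / sqrt (w / W))) with (W * W / (sqrt (w/W) * sqrt (w/W))) by (field; lra).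
   rewrite sqrt_sqrt by (unfold Rdiv; apply Rmult_le_pos; [lra| left; apply Rinv_0_lt_compat; auto]).
   replace (W * W / (w / W)) with (W^3 / w) by (field; lra).
   replace (w*q^3*(w*q^3)) with ((w*q^2)^3 / w) by (field; lra).
   assert ((w*q^2)^3 <= W^3) by (apply pow_incr; split; nra).
   unfold Rdiv. apply Rmult_le_compat_r; auto. left; apply Rinv_0_lt_compat; auto. }
 unfold Rmin. destruct (Rle_dec (w/W) (/ sqrt (w/W))); auto. Qed.

Lemma row_lemma B sg (t : nat -> R) : 0 < sg -> (forall k, (k < B)%nat -> 0 <= t k <= 1) ->
  rsum B (fun k => 2 ^ k / sg * qf (t k) ^ 3) <= 7 * sqrt (rsum B (fun k => (2 ^ k / sg) ^ 2 * t k)).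
Proof. intros Hs Ht.
 set (Q := rsum B (fun k => (2 ^ k / sg) ^ 2 * t k)).
 assert (Hw: forall k, 0 < 2 ^ k / sg) by (intros; unfold Rdiv; apply Rmult_lt_0_compat; [apply pow_lt; lra| apply Rinv_0_lt_compat; auto]).
 assert (Hterm: forall k, (k < B)%nat -> 0 <= (2 ^ k / sg) ^ 2 * t k) by (intros k Hk; specialize (Ht k Hk); apply Rmult_le_pos; [apply pow2_ge_0|lra]).
 assert (HQ: 0 <= Q) by (apply rsum_nonneg; auto).
 assert (Hle: forall k, (k < B)%nat -> (2 ^ k / sg) ^ 2 * t k <= Q) by (intros k Hk; unfold Q; apply (rsum_single_le B (fun k => (2 ^ k / sg) ^ 2 * t k)); auto).
 destruct (Rle_lt_or_eq_dec _ _ HQ) as [HQp|HQ0].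
 - set (W := sqrt Q). assert (HW: 0 < W) by (apply sqrt_lt_R0; auto).
   assert (HWW: W ^ 2 = Q) by (unfold W; simpl; rewrite Rmult_1_r; apply sqrt_sqrt; lra).
   apply Rle_trans with (rsum B (fun k => W * mfun (2 ^ k * / (sg * W)))).
   + apply rsum_le. intros k Hk. replace (2 ^ k * / (sg * W)) with ((2^k/sg) / W) by (field; lra).
     apply point_bound; auto. apply qf_bounds; auto. rewrite qf_pow4 by (apply Ht; auto). rewrite HWW. auto.
   + rewrite rsum_scal. fold W. rewrite Rmult_comm. apply Rmult_le_compat_r. lra.
     apply mfun_sum. apply Rinv_0_lt_compat. nra.
 - rewrite rsum_zero. rewrite <- HQ0, sqrt_0. lra.
   intros k Hk. assert (t k = 0). { specialize (Hle k Hk). specialize (Hterm k Hk). specialize (Hw k). specialize (Ht k Hk).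
     rewrite <- HQ0 in Hle. assert ((2 ^ k / sg) ^ 2 * t k = 0) by lra. apply Rmult_integral in H. destruct H; auto. exfalso. nra. }
   rewrite H. unfold qf. rewrite sqrt_0, sqrt_0. ring. Qed.

Lemma Rltb_true x y : Rltb x y = true <-> x < y.
Proof. unfold Rltb. destruct (Rlt_dec x y); split; intros; auto; discriminate. Qed.

Lemma pow2_ge_INR m : INR m <= 2 ^ m.
Proof. induction m. simpl; lra. rewrite S_INR. simpl. assert (1 <= 2 ^ m) by (apply pow_R1_Rle; lra). lra. Qed.

Lemma weight_pos n h k : (1 <= n)%nat -> (1 <= h)%nat -> 0 < weight n h k.
Proof. intros. unfold weight. apply Rmult_lt_0_compat. apply pow_lt; lra. apply Rinv_0_lt_compat. apply sqrt_lt_R0.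
 apply Rmult_lt_0_compat; apply lt_0_INR; lia. Qed.

Lemma sqrtd_pos d : (2 <= d)%nat -> 0 < sqrt (INR d).
Proof. intros. apply sqrt_lt_R0. apply lt_0_INR. lia. Qed.

Lemma gadj_ratio n h d adjH i k i' k' : (1 <= n)%nat -> (1 <= h)%nat -> (2 <= d)%nat ->
  gadj n h d adjH i k i' k' = true -> weight n h k' < sqrt (INR d) * weight n h k.
Proof. intros Hn Hh Hd G. unfold gadj in G. apply andb_prop in G as [G G3]. apply andb_prop in G as [G1 G2].
 apply Rltb_true in G2. pose proof (weight_pos n h k Hn Hh). pose proof (weight_pos n h k' Hn Hh). pose proof (sqrtd_pos d Hd).
 set (w := weight n h k) in *. set (w' := weight n h k') in *. set (s := sqrt (INR d)) in *.
 assert (w / w' * w' = w) by (field; lra). assert (/ s * s = 1) by (field; lra).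
 assert (/ s * w' < w / w' * w') by (apply Rmult_lt_compat_r; lra). nra. Qed.

Lemma gadj_krange n h d adjH i k i' k' : (1 <= n)%nat -> (1 <= h)%nat -> (2 <= d)%nat ->
  gadj n h d adjH i k i' k' = true -> (k' < k + d + 1)%nat.
Proof. intros Hn Hh Hd G. pose proof (gadj_ratio _ _ _ _ _ _ _ _ Hn Hh Hd G) as Hr.
 destruct (Nat.lt_ge_cases k' (k + d + 1)); auto. exfalso.
 unfold weight in Hr. set (sg := sqrt (INR n * INR h)) in *.
 assert (Hsg: 0 < / sg) by (apply Rinv_0_lt_compat, sqrt_lt_R0, Rmult_lt_0_compat; apply lt_0_INR; lia).
 assert (Hp: 2 ^ k' < sqrt (INR d) * 2 ^ k) by (apply Rmult_lt_reg_r with (/ sg); auto; unfold Rdiv in Hr; rewrite Rmult_assoc; lra).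
 assert (Hsd: sqrt (INR d) <= INR d). { rewrite <- (sqrt_square (INR d)) at 2 by (apply pos_INR). apply sqrt_le_1_alt. assert (2 <= INR d) by (apply (le_INR 2); lia). nra. }
 assert (2 ^ (k + d + 1) <= 2 ^ k') by (apply Rle_pow; [lra|lia]).
 rewrite !pow_add in H0. pose proof (pow2_ge_INR d). assert (0 < 2 ^ k) by (apply pow_lt; lra). assert (0 < 2 ^ d) by (apply pow_lt; lra). simpl pow in H0 at 3.
 assert (sqrt (INR d) * 2 ^ k <= 2 ^ d * 2 ^ k) by (apply Rmult_le_compat_r; lra). assert (2^k*2^d = 2^d*2^k) by ring. assert (0 < 2^d*2^k) by (apply Rmult_lt_0_compat; lra). lra. Qed.

Lemma gadj_irrefl n h d adjH i k : d_regular h d adjH -> gadj n h d adjH i k i k = false.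
Proof. intros [_ [Hi _]]. unfold gadj. rewrite Hi. auto. Qed.

Lemma gadj_sym n h d adjH i k i' k' : (1 <= n)%nat -> (1 <= h)%nat -> (2 <= d)%nat -> d_regular h d adjH ->
  gadj n h d adjH i k i' k' = gadj n h d adjH i' k' i k.
Proof. intros Hn Hh Hd [Hs _]. unfold gadj. rewrite Hs.
 pose proof (weight_pos n h k Hn Hh). pose proof (weight_pos n h k' Hn Hh). pose proof (sqrtd_pos d Hd).
 set (w := weight n h k) in *. set (w' := weight n h k') in *. set (s := sqrt (INR d)) in *.
 assert (E1: Rltb (/ s) (w / w') = Rltb (w' / w) s).
 { apply eq_true_iff_eq. rewrite !Rltb_true. split; intros.
   - apply Rmult_lt_reg_r with (w / w' * s). apply Rmult_lt_0_compat; [apply Rdiv_lt_0_compat|]; lra.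
     replace (w' / w * (w / w' * s)) with s by (field; lra). replace (s * (w / w' * s)) with (w / w' * (s * s)) by ring.
     replace (/ s) with (/s * 1) in H2 by ring. assert (s * s > 0) by nra. 
     apply Rmult_lt_reg_l with (/ s). apply Rinv_0_lt_compat; lra. replace (/ s * (w / w' * (s * s))) with (w / w' * s) by (field; lra).
     replace (/ s * s) with 1 by (field; lra). 
     apply Rmult_lt_reg_l with (/ s). apply Rinv_0_lt_compat; lra. replace (/ s * (w / w' * s)) with (w/w') by (field; lra). lra.
   - apply Rmult_lt_reg_r with (w' / w * s). apply Rmult_lt_0_compat; [apply Rdiv_lt_0_compat|]; lra.
     replace (/ s * (w' / w * s)) with (w' / w) by (field; lra). replace (w / w' * (w' / w * s)) with s by (field; lra). lra. }
 assert (E2: Rltb (w / w') s = Rltb (/ s) (w' / w)).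
 { apply eq_true_iff_eq. rewrite !Rltb_true. split; intros.
   - apply Rmult_lt_reg_r with (w / w' * s). apply Rmult_lt_0_compat; [apply Rdiv_lt_0_compat|]; lra.
     replace (w' / w * (w / w' * s)) with s by (field; lra).
     replace (/ s * (w / w' * s)) with (w / w') by (field; lra). lra.
   - apply Rmult_lt_reg_r with (w' / w * s). apply Rmult_lt_0_compat; [apply Rdiv_lt_0_compat|]; lra.
     replace (w / w' * (w' / w * s)) with s by (field; lra).
     replace (s * (w' / w * s)) with (w' / w * (s * s)) by ring.
     apply Rmult_lt_reg_l with (/ s). apply Rinv_0_lt_compat; lra.
     replace (/ s * (w' / w * (s * s))) with (w' / w * s) by (field; lra). replace (/ s * s) with 1 by (field; lra).
     apply Rmult_lt_reg_l with (/ s). apply Rinv_0_lt_compat; lra. replace (/ s * (w' / w * s)) with (w' / w) by (field; lra). lra. }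
 rewrite E1, E2. destruct (adjH i' i); simpl; auto. apply andb_comm. Qed.

Definition D2 h B (g : nat -> nat -> R) : R := rsum h (fun i => rsum B (fun k => g i k)).

Lemma D2_ext h B f g : (forall i k, (i < h)%nat -> (k < B)%nat -> f i k = g i k) -> D2 h B f = D2 h B g.
Proof. intros H. unfold D2. apply rsum_ext. intros. apply rsum_ext. intros. apply H; auto. Qed.
Lemma D2_le h B f g : (forall i k, (i < h)%nat -> (k < B)%nat -> f i k <= g i k) -> D2 h B f <= D2 h B g.
Proof. intros H. unfold D2. apply rsum_le. intros. apply rsum_le. intros. apply H; auto. Qed.
Lemma D2_plus h B f g : D2 h B (fun i k => f i k + g i k) = D2 h B f + D2 h B g.
Proof. unfold D2. rewrite <- rsum_plus. apply rsum_ext. intros. apply rsum_plus. Qed.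
Lemma D2_minus h B f g : D2 h B (fun i k => f i k - g i k) = D2 h B f - D2 h B g.
Proof. unfold D2. rewrite <- rsum_minus. apply rsum_ext. intros. apply rsum_minus. Qed.
Lemma D2_scal h B c f : D2 h B (fun i k => c * f i k) = c * D2 h B f.
Proof. unfold D2. rewrite <- rsum_scal. apply rsum_ext. intros. apply rsum_scal. Qed.
Lemma D2_nonneg h B f : (forall i k, (i < h)%nat -> (k < B)%nat -> 0 <= f i k) -> 0 <= D2 h B f.
Proof. intros H. unfold D2. apply rsum_nonneg. intros. apply rsum_nonneg. intros. apply H; auto. Qed.
Lemma D2_abs h B f : Rabs (D2 h B f) <= D2 h B (fun i k => Rabs (f i k)).
Proof. unfold D2. eapply Rle_trans. apply rsum_abs. apply rsum_le. intros. apply rsum_abs. Qed.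
Lemma D2_pick h B (g : nat -> nat -> R) i0 k0 : (i0 < h)%nat -> (k0 < B)%nat ->
  D2 h B (fun i k => if Nat.eqb i i0 && Nat.eqb k k0 then g i k else 0) = g i0 k0.
Proof. intros Hi Hk. unfold D2.
 rewrite (rsum_ext h _ (fun i => if Nat.eqb i i0 then g i k0 else 0)). apply (rsum_pick h (fun i => g i k0)); auto.
 intros i _. destruct (Nat.eqb_spec i i0); simpl. rewrite (rsum_pick B (fun k => g i k)); auto. apply rsum_zero; auto. Qed.
Lemma D2_single_le h B f i0 k0 : (forall i k, (i < h)%nat -> (k < B)%nat -> 0 <= f i k) -> (i0 < h)%nat -> (k0 < B)%nat -> f i0 k0 <= D2 h B f.
Proof. intros H Hi Hk. unfold D2. apply Rle_trans with (rsum B (fun k => f i0 k)).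
 apply rsum_single_le; auto. apply (rsum_single_le h (fun i => rsum B (fun k => f i k))); auto.
 intros. apply rsum_nonneg; auto. Qed.

Lemma CS2 h B x y : D2 h B (fun i k => x i k * y i k) <= sqrt (D2 h B (fun i k => x i k ^ 2)) * sqrt (D2 h B (fun i k => y i k ^ 2)).
Proof. unfold D2. apply Rle_trans with (rsum h (fun i => sqrt (rsum B (fun k => x i k ^ 2)) * sqrt (rsum B (fun k => y i k ^ 2)))).
 apply rsum_le. intros. apply CS.
 eapply Rle_trans. apply CS. right. f_equal; f_equal; apply rsum_ext; intros; simpl; rewrite Rmult_1_r; apply sqrt_sqrt; apply rsum_nonneg; intros; apply pow2_ge_0. Qed.

Definition Gf n h d adjH (a : nat -> nat -> nat) (e : nat -> nat -> nat -> nat -> nat) i k i' k' : R :=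
  if gadj n h d adjH i k i' k' then weight n h k * weight n h k' * (INR (e i k i' k') - INR (a i k) * INR (a i' k') / INR n) else 0.
Definition sR n h B (a : nat -> nat -> nat) i := rsum B (fun k => weight n h k ^ 2 * INR (a i k)).
Definition Zf n h B (adjH : nat -> nat -> bool) a i := rsum h (fun i' => if adjH i i' then sR n h B a i' else 0).
Definition fv n h d B adjH L (a : nat -> nat -> nat) i k :=
  8 * (L/10) * sqrt (INR d) * weight n h k ^ 2 * INR (a i k)
  + weight n h k * (4 * exp 1 * sqrt (L/10) * qf (INR (a i k) / INR n) ^ 3 * sqrt (INR n * Zf n h B adjH a i)).
Definition condv n h d adjH L a e (S : nat -> nat -> bool) i k : Prop :=
  rsum h (fun i' => rsum (k + d + 1) (fun k' =>
        if gadj n h d adjH i k i' k' && S i' k' then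
          INR (a i k) * INR (a i' k') / INR n * bfun (eps n a e i k i' k')
        else 0))
      >= (if Nat.eqb (a i k) 0 then 0
          else L / 10 * INR (a i k) * ln (exp 1 * INR n / INR (a i k))).

Lemma eps_ge n (a : nat -> nat -> nat) e i k i' k' : (1 <= n)%nat -> -1 <= eps n a e i k i' k'.
Proof. intros Hn. unfold eps. destruct (negb (a i k =? 0)%nat && negb (a i' k' =? 0)%nat); [|lra].
 assert (0 <= INR (e i k i' k') * INR n / (INR (a i k) * INR (a i' k'))).
 { unfold Rdiv. apply Rmult_le_pos. apply Rmult_le_pos; apply pos_INR. destruct (Req_dec (INR (a i k) * INR (a i' k')) 0).
   rewrite H, Rinv_0; lra. left. apply Rinv_0_lt_compat. pose proof (pos_INR (a i k)). pose proof (pos_INR (a i' k')). nra. }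
 lra. Qed.

Lemma vertex_facts (A N : R) : 1 <= A -> A <= N ->
  let q := qf (A / N) in let l := ln (exp 1 * N / A) in
  0 < q /\ q <= 1 /\ q ^ 4 = A / N /\ 1 <= l /\ l <= 4 / q /\ l = 1 - 4 * ln q /\ ln q <= 0.
Proof. intros HA HAN q l.
 assert (Ht: 0 < A / N <= 1). { split. apply Rdiv_lt_0_compat; lra. apply Rmult_le_reg_r with N. lra. unfold Rdiv. rewrite Rmult_assoc, Rinv_l by lra. lra. }
 assert (Hq4: q ^ 4 = A / N) by (apply qf_pow4; lra).
 assert (Hqb: 0 <= q <= 1) by (apply qf_bounds; lra).
 assert (Hq: 0 < q). { unfold q, qf. apply sqrt_lt_R0, sqrt_lt_R0. lra. }
 assert (Hl: l = 1 - 4 * ln q).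
 { unfold l. replace (exp 1 * N / A) with (exp 1 * / (q ^ 4)) by (rewrite Hq4; field; lra).
   rewrite ln_mult, ln_exp, ln_Rinv, ln_pow; auto. all: try (simpl INR; lra). all: try apply exp_pos. all: try (apply Rinv_0_lt_compat, pow_lt; auto). all: try (apply pow_lt; auto). }
 pose proof (ln_le_sub1 q Hq). pose proof (ln_ge_1minv q Hq).
 assert (1/q >= 1). { unfold Rdiv. rewrite Rmult_1_l. rewrite <- Rinv_1. apply Rle_ge, Rinv_le_contravar; lra. }
 repeat split; try lra. Qed.

Lemma pair_bound (w w' sd A A' N E l Tp ep : R) (z : bool) :
 0 < w -> 0 < w' -> w' < sd * w -> 1 <= A -> 0 <= A' -> 1 <= N -> 0 <= E ->
 (z = true -> A' = 0 /\ E = 0) -> (z = false -> 1 <= A' /\ ep = E * N / (A * A') - 1) -> -1 <= ep ->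
 1 <= l -> 1 <= Tp -> 2 <= ln Tp -> l / 4 <= ln Tp ->
 Rabs (w * w' * (E - A * A' / N)) <= 8 * sd * w ^ 2 / l * (A * A' / N * bfun ep)
   + w * ((w' * sqrt (A * A' / N)) * (if negb z && Rltb (1 + ep) Tp then sqrt (A * A' / N) * Rabs ep else 0)).
Proof. intros Hw Hw' Hr HA HA' HN HE Hz1 Hz2 Hep Hl HT HT2 HT3.
 pose proof (bfun_nonneg ep Hep) as Hb.
 assert (Ht1: 0 <= 8 * sd * w ^ 2 / l * (A * A' / N * bfun ep)).
 { assert (0 < sd) by nra. apply Rmult_le_pos. unfold Rdiv. apply Rmult_le_pos. assert (0 < w^2) by (apply pow_lt; auto). nra.
   left; apply Rinv_0_lt_compat; lra. apply Rmult_le_pos; auto. unfold Rdiv. apply Rmult_le_pos. nra. left; apply Rinv_0_lt_compat; lra. }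
 destruct z.
 - destruct (Hz1 eq_refl) as [-> ->]. simpl. replace (w * w' * (0 - A * 0 / N)) with 0 by (field; lra). rewrite Rabs_R0. lra.
 - destruct (Hz2 eq_refl) as [HA1 Hepd]. simpl negb. rewrite andb_true_l.
   set (mu := A * A' / N) in *.
   assert (Hmu: 0 < mu) by (unfold mu; apply Rdiv_lt_0_compat; nra).
   assert (HEm: E - mu = mu * ep) by (rewrite Hepd; unfold mu; field; split; lra).
   rewrite HEm. rewrite Rabs_mult. rewrite (Rabs_right (w*w')) by nra.
   assert (Hsm: sqrt mu * sqrt mu = mu) by (apply sqrt_sqrt; lra).
   destruct (Rltb (1 + ep) Tp) eqn:Et.
   + assert (w * (w' * sqrt mu * (sqrt mu * Rabs ep)) = w * w' * Rabs (mu * ep)).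
     { rewrite Rabs_mult, (Rabs_right mu) by lra. replace (w * (w' * sqrt mu * (sqrt mu * Rabs ep))) with (w*w'*(sqrt mu * sqrt mu)*Rabs ep) by ring. rewrite Hsm. ring. }
     rewrite H. rewrite Rabs_mult, (Rabs_right mu) by lra. lra.
   + assert (Hge: Tp <= 1 + ep). { destruct (Rlt_dec (1 + ep) Tp). apply Rltb_true in r. rewrite r in Et. discriminate. lra. }
     assert (Hln: ln Tp <= ln (1 + ep)) by (apply ln_le; lra).
     assert (Hbig: (1 + ep) * ln (1 + ep) <= 2 * bfun ep) by (apply bfun_big; lra).
     assert (H8: (1 + ep) * l <= 8 * bfun ep) by nra.
     rewrite Rmult_0_r, Rmult_0_r, Rplus_0_r.
     rewrite Rabs_mult, (Rabs_right mu) by lra. rewrite (Rabs_right ep) by lra.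
     assert (Hx: w * w' * (mu * ep) <= w * (sd * w) * (mu * (1 + ep))).
     { apply Rmult_le_compat; try nra. }
     assert (Hy: (1 + ep) <= 8 * bfun ep / l) by (apply Rmult_le_reg_r with l; [lra|]; unfold Rdiv; rewrite Rmult_assoc, Rinv_l by lra; lra).
     apply Rle_trans with (w * (sd * w) * (mu * (1 + ep))); auto.
     replace (8 * sd * w ^ 2 / l * (mu * bfun ep)) with (w * (sd * w) * (mu * (8 * bfun ep / l))) by (field; lra).
     apply Rmult_le_compat_l. assert (0 < sd) by nra. nra. apply Rmult_le_compat_l; lra. Qed.

Lemma final_alg (X Y A N Z c l q : R) : 0 <= X -> X <= A / N * Z -> 0 <= Y -> Y <= 4 * (exp 1 ^ 2 / q) * (c * A * l) ->
  0 < q -> l <= 4 / q -> q ^ 4 = A / N -> 0 < N -> 0 <= Z -> 0 <= c -> 0 < A -> 0 <= l ->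
  sqrt X * sqrt Y <= 4 * exp 1 * sqrt c * q ^ 3 * sqrt (N * Z).
Proof. intros HX HX' HY HY' Hq Hl Hq4 HN HZ Hc HA Hl0.
 rewrite <- sqrt_mult_alt by auto.
 assert (HAe: A = N * q ^ 4) by (rewrite Hq4; field; lra).
 assert (He: 0 < exp 1) by apply exp_pos.
 assert (Hprod: X * Y <= 16 * exp 1 ^ 2 * c * q ^ 6 * (N * Z)).
 { apply Rle_trans with ((A / N * Z) * (4 * (exp 1 ^ 2 / q) * (c * A * l))).
   apply Rmult_le_compat; auto.
   replace ((A / N * Z) * (4 * (exp 1 ^ 2 / q) * (c * A * l))) with (4 * exp 1 ^ 2 * c * Z * N * q ^ 7 * l) by (rewrite HAe; field; lra).
   replace (16 * exp 1 ^ 2 * c * q ^ 6 * (N * Z)) with (4 * exp 1 ^ 2 * c * Z * N * q ^ 7 * (4 / q)) by (field; lra).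
   apply Rmult_le_compat_l; auto. assert (0 < q^7) by (apply pow_lt; auto). assert (0 < exp 1 ^ 2) by (apply pow_lt; auto).
   repeat apply Rmult_le_pos; lra. }
 assert (Hr: 0 <= 4 * exp 1 * sqrt c * q ^ 3 * sqrt (N * Z)).
 { assert (0 < q^3) by (apply pow_lt; auto). pose proof (sqrt_pos c). pose proof (sqrt_pos (N*Z)). repeat apply Rmult_le_pos; lra. }
 rewrite <- (sqrt_square (4 * exp 1 * sqrt c * q ^ 3 * sqrt (N * Z))) by auto.
 apply sqrt_le_1_alt.
 replace (4 * exp 1 * sqrt c * q ^ 3 * sqrt (N * Z) * (4 * exp 1 * sqrt c * q ^ 3 * sqrt (N * Z)))
   with (16 * exp 1 ^ 2 * (sqrt c * sqrt c) * q ^ 6 * (sqrt (N * Z) * sqrt (N * Z))) by ring.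
 rewrite !sqrt_sqrt; auto. apply Rmult_le_pos; lra. Qed.

Lemma vertex_bound n h d adjH L B (a : nat -> nat -> nat) e (T : nat -> nat -> bool) i k :
 (1 <= n)%nat -> (2 <= d)%nat -> 0 < L ->
 (forall i k, T i k = true -> (i < h)%nat /\ (k < B)%nat) ->
 (forall i' k', gadj n h d adjH i k i' k' = true -> (e i k i' k' <= Nat.min (a i k) (a i' k'))%nat) ->
 INR (a i k) <= INR n -> (i < h)%nat -> (k < B)%nat -> a i k <> 0%nat ->
 ~ condv n h d adjH L a e T i k ->
 D2 h B (fun i' k' => Rabs (if T i' k' then Gf n h d adjH a e i k i' k' else 0)) <= fv n h d B adjH L a i k.
Proof. intros Hn Hd HL Hbox He HaN Hi Hk Ha Hnc.
 assert (Hh: (1 <= h)%nat) by lia.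
 set (A := INR (a i k)) in *. set (N := INR n) in *.
 assert (HA: 1 <= A) by (unfold A; apply (le_INR 1); lia).
 assert (HN: 1 <= N) by (unfold N; apply (le_INR 1); lia).
 destruct (vertex_facts A N HA HaN) as [Hq [Hq1 [Hq4 [Hl1 [Hl4 [Hleq Hlnq]]]]]].
 set (q := qf (A / N)) in *. set (l := ln (exp 1 * N / A)) in *.
 set (w := weight n h k).
 assert (Hw: 0 < w) by (apply weight_pos; auto).
 set (sd := sqrt (INR d)). assert (Hsd: 0 < sd) by (apply sqrtd_pos; auto).
 set (Tp := exp 1 ^ 2 / q).
 assert (He1: 1 <= exp 1) by (pose proof (exp_ineq1_le 1); lra).
 assert (HTp: 1 <= Tp). { unfold Tp. apply Rmult_le_reg_r with q; auto. unfold Rdiv. rewrite Rmult_assoc, Rinv_l by lra. nra. }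
 assert (HlnTp: ln Tp = 2 - ln q).
 { unfold Tp. unfold Rdiv. rewrite ln_mult, ln_pow, ln_exp, ln_Rinv; auto. simpl INR. lra. apply exp_pos. apply pow_lt, exp_pos. apply Rinv_0_lt_compat; auto. }
 set (Hf := fun i' k' => if gadj n h d adjH i k i' k' && T i' k' then A * INR (a i' k') / N * bfun (eps n a e i k i' k') else 0).
 assert (Hsum: D2 h B Hf < L / 10 * A * l).
 { unfold condv in Hnc. fold A N in Hnc. replace (a i k =? 0)%nat with false in Hnc by (symmetry; apply Nat.eqb_neq; auto).
   fold l in Hnc. apply Rnot_ge_lt in Hnc. eapply Rle_lt_trans; [|exact Hnc]. right. unfold D2. apply rsum_ext. intros i' Hi'.
   apply rsum_range.
   - intros j Hj. unfold Hf. destruct (T i' j) eqn:ET. destruct (Hbox _ _ ET); lia. rewrite andb_false_r. auto.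
   - intros j Hj. destruct (gadj n h d adjH i k i' j) eqn:G. pose proof (gadj_krange _ _ _ _ _ _ _ _ Hn Hh Hd G). lia. auto. }

 assert (HlnT2: 2 <= ln Tp) by lra. assert (HlnT3: l / 4 <= ln Tp) by lra.
 set (xs := fun i' k' => if gadj n h d adjH i k i' k' && T i' k' then weight n h k' * sqrt (A * INR (a i' k') / N) else 0).
 set (ys := fun i' k' => if gadj n h d adjH i k i' k' && T i' k' then
    (if negb (a i' k' =? 0)%nat && Rltb (1 + eps n a e i k i' k') Tp then sqrt (A * INR (a i' k') / N) * Rabs (eps n a e i k i' k') else 0) else 0).
 assert (Hpt: forall i' k', (i' < h)%nat -> (k' < B)%nat ->
   Rabs (if T i' k' then Gf n h d adjH a e i k i' k' else 0) <= 8 * sd * w ^ 2 / l * Hf i' k' + w * (xs i' k' * ys i' k')).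
 { intros i' k' Hi' Hk'. unfold Hf, xs, ys, Gf. destruct (T i' k'); destruct (gadj n h d adjH i k i' k') eqn:G; simpl.
   - fold w. apply pair_bound; auto.
     + apply weight_pos; auto.
     + apply gadj_ratio in G; auto.
     + apply pos_INR.
     + apply pos_INR.
     + intros Hz. apply Nat.eqb_eq in Hz. rewrite Hz. split. auto. specialize (He _ _ G). rewrite Hz in He. rewrite Nat.min_0_r in He. replace (e i k i' k') with 0%nat by lia. auto.
     + intros Hz. apply Nat.eqb_neq in Hz. split. apply (le_INR 1); lia. unfold eps. replace (a i k =? 0)%nat with false by (symmetry; apply Nat.eqb_neq; auto).
       replace (a i' k' =? 0)%nat with false by (symmetry; apply Nat.eqb_neq; auto). simpl. auto.
     + apply eps_ge; auto.
   - rewrite Rabs_R0. lra.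
   - rewrite Rabs_R0. lra.
   - rewrite Rabs_R0. lra. }

 assert (HHf: forall i' k', 0 <= Hf i' k').
 { intros. unfold Hf. destruct (_ && _). apply Rmult_le_pos. unfold Rdiv. apply Rmult_le_pos. pose proof (pos_INR (a i' k')). nra.
   left; apply Rinv_0_lt_compat; lra. apply bfun_nonneg, eps_ge; auto. lra. }
 assert (Hxs: D2 h B (fun i' k' => xs i' k' ^ 2) <= A / N * Zf n h B adjH a i).
 { unfold Zf, D2. rewrite <- rsum_scal. apply rsum_le. intros i' Hi'. destruct (adjH i i') eqn:Ad.
   - unfold sR. rewrite <- rsum_scal. apply rsum_le. intros k' Hk'. unfold xs. destruct (_ && _).
     + rewrite Rpow_mult_distr. replace (sqrt (A * INR (a i' k') / N) ^ 2) with (A * INR (a i' k') / N).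
       right. field. lra. simpl. rewrite Rmult_1_r. symmetry. apply sqrt_sqrt. unfold Rdiv. apply Rmult_le_pos. pose proof (pos_INR (a i' k')). nra. left; apply Rinv_0_lt_compat; lra.
     + simpl. rewrite Rmult_0_l. apply Rmult_le_pos. unfold Rdiv; apply Rmult_le_pos; [lra|left; apply Rinv_0_lt_compat; lra].
       apply Rmult_le_pos. apply pow2_ge_0. apply pos_INR.
   - rewrite Rmult_0_r. right. apply rsum_zero. intros k' _. unfold xs. unfold gadj. rewrite Ad. simpl. ring. }
 assert (Hys: D2 h B (fun i' k' => ys i' k' ^ 2) <= 4 * Tp * D2 h B Hf).
 { rewrite <- D2_scal. apply D2_le. intros i' k' _ _. unfold ys, Hf. destruct (_ && _).
   - destruct (negb _ && Rltb _ _) eqn:Et.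
     + apply andb_prop in Et as [_ Et]. apply Rltb_true in Et.
       set (ep := eps n a e i k i' k') in *. set (mu := A * INR (a i' k') / N).
       assert (Hmu: 0 <= mu) by (unfold mu, Rdiv; apply Rmult_le_pos; [pose proof (pos_INR (a i' k')); nra| left; apply Rinv_0_lt_compat; lra]).
       rewrite Rpow_mult_distr. replace (sqrt mu ^ 2) with mu by (simpl; rewrite Rmult_1_r; symmetry; apply sqrt_sqrt; auto).
       rewrite pow2_abs. 
       pose proof (bfun_quad ep (eps_ge n a e i k i' k' Hn)).
       assert (Rmax 1 (1 + ep) <= Tp) by (apply Rmax_lub; lra).
       pose proof (bfun_nonneg ep (eps_ge n a e i k i' k' Hn)).
       apply Rle_trans with (mu * (4 * Rmax 1 (1 + ep) * bfun ep)). apply Rmult_le_compat_l; auto.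
       replace (4 * Tp * (mu * bfun ep)) with (mu * (4 * Tp * bfun ep)) by ring. apply Rmult_le_compat_l; auto.
       apply Rmult_le_compat_r; auto. lra.
     + simpl. rewrite Rmult_0_l. specialize (HHf i' k'). unfold Hf in HHf. 
       apply Rmult_le_pos. lra. apply Rmult_le_pos. unfold Rdiv. apply Rmult_le_pos. pose proof (pos_INR (a i' k')). nra.
       left; apply Rinv_0_lt_compat; lra. apply bfun_nonneg, eps_ge; auto.
   - simpl. lra. }

 apply Rle_trans with (D2 h B (fun i' k' => 8 * sd * w ^ 2 / l * Hf i' k' + w * (xs i' k' * ys i' k'))).
 { apply D2_le. intros; apply Hpt; auto. }
 rewrite D2_plus, D2_scal, D2_scal.
 assert (HX: 0 <= D2 h B (fun i' k' => xs i' k' ^ 2)) by (apply D2_nonneg; intros; apply pow2_ge_0).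
 assert (HY: 0 <= D2 h B (fun i' k' => ys i' k' ^ 2)) by (apply D2_nonneg; intros; apply pow2_ge_0).
 assert (HZ: 0 <= Zf n h B adjH a i).
 { unfold Zf. apply rsum_nonneg. intros. destruct (adjH i j). unfold sR. apply rsum_nonneg. intros. apply Rmult_le_pos. apply pow2_ge_0. apply pos_INR. lra. }
 assert (Hfin: sqrt (D2 h B (fun i' k' => xs i' k' ^ 2)) * sqrt (D2 h B (fun i' k' => ys i' k' ^ 2))
   <= 4 * exp 1 * sqrt (L/10) * q ^ 3 * sqrt (N * Zf n h B adjH a i)).
 { apply final_alg with A l; auto; try lra.
   apply Rle_trans with (4 * Tp * D2 h B Hf); auto.
   replace (4 * (exp 1 ^ 2 / q) * (L / 10 * A * l)) with (4 * Tp * (L / 10 * A * l)) by (unfold Tp; ring). apply Rmult_le_compat_l; lra. }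
 pose proof (CS2 h B xs ys) as HCS.
 unfold fv. fold A N w sd q. fold q.
 assert (H1: 8 * sd * w ^ 2 / l * D2 h B Hf <= 8 * (L / 10) * sd * w ^ 2 * A).
 { replace (8 * (L / 10) * sd * w ^ 2 * A) with (8 * sd * w ^ 2 / l * (L / 10 * A * l)) by (field; lra).
   apply Rmult_le_compat_l. assert (0 < w^2) by (apply pow_lt; auto). unfold Rdiv. apply Rmult_le_pos. nra. left; apply Rinv_0_lt_compat; lra. lra. }
 assert (H2: w * D2 h B (fun i' k' => xs i' k' * ys i' k') <= w * (4 * exp 1 * sqrt (L / 10) * q ^ 3 * sqrt (N * Zf n h B adjH a i))).
 { apply Rmult_le_compat_l; lra. }
 lra. Qed.

Definition Yf n h d adjH B a e (T : nat -> nat -> bool) : R :=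
  D2 h B (fun i k => D2 h B (fun i' k' => if T i k && T i' k' then Gf n h d adjH a e i k i' k' else 0)).
Definition FT n h d B adjH L a (T : nat -> nat -> bool) : R := D2 h B (fun i k => if T i k then fv n h d B adjH L a i k else 0).
Definition cnt h B (T : nat -> nat -> bool) : R := D2 h B (fun i k => if T i k then 1 else 0).
Definition rem (T : nat -> nat -> bool) i0 k0 := fun i k => T i k && negb (Nat.eqb i i0 && Nat.eqb k k0).

Lemma D2_ifc h B (b : bool) f : D2 h B (fun i k => if b then f i k else 0) = if b then D2 h B f else 0.
Proof. destruct b; auto. unfold D2. apply rsum_zero. intros. apply rsum_zero. auto. Qed.

Lemma D2_rem h B (T : nat -> nat -> bool) i0 k0 (f : nat -> nat -> R) : (i0 < h)%nat -> (k0 < B)%nat -> T i0 k0 = true ->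
  D2 h B (fun i k => if T i k then f i k else 0) - D2 h B (fun i k => if rem T i0 k0 i k then f i k else 0) = f i0 k0.
Proof. intros Hi Hk HT. rewrite <- D2_minus. rewrite <- (D2_pick h B f i0 k0) by auto. apply D2_ext. intros i k _ _.
 unfold rem. destruct (Nat.eqb i i0) eqn:E1; destruct (Nat.eqb k k0) eqn:E2; simpl; try (rewrite andb_true_r; ring).
 apply Nat.eqb_eq in E1, E2. subst. rewrite HT. simpl. ring. Qed.

Lemma Gf_sym n h d adjH a e i k i' k' : (1 <= n)%nat -> (1 <= h)%nat -> (2 <= d)%nat -> d_regular h d adjH ->
  (gadj n h d adjH i k i' k' = true -> e i k i' k' = e i' k' i k) ->
  Gf n h d adjH a e i k i' k' = Gf n h d adjH a e i' k' i k.
Proof. intros Hn Hh Hd HH He. unfold Gf. rewrite (gadj_sym n h d adjH i k i' k') by auto.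
 destruct (gadj n h d adjH i' k' i k) eqn:G; auto. rewrite He. unfold Rdiv; ring. rewrite gadj_sym; auto. Qed.

Lemma Y_rem n h d adjH B a e (T : nat -> nat -> bool) i0 k0 : (1 <= n)%nat -> (2 <= d)%nat -> d_regular h d adjH ->
  (forall i k i' k', gadj n h d adjH i k i' k' = true -> e i k i' k' = e i' k' i k) ->
  (i0 < h)%nat -> (k0 < B)%nat -> T i0 k0 = true ->
  Yf n h d adjH B a e T - Yf n h d adjH B a e (rem T i0 k0) = 2 * D2 h B (fun i' k' => if T i' k' then Gf n h d adjH a e i0 k0 i' k' else 0).
Proof. intros Hn Hd HH He Hi Hk HT. assert (Hh: (1 <= h)%nat) by lia. unfold Yf. rewrite <- D2_minus.
 set (G := Gf n h d adjH a e).
 assert (Hirr: forall i k, G i k i k = 0) by (intros; unfold G, Gf; rewrite gadj_irrefl; auto).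
 rewrite (D2_ext h B _ (fun i k => (if Nat.eqb i i0 && Nat.eqb k k0 then D2 h B (fun i' k' => if T i' k' then G i k i' k' else 0) else 0)
     + (if T i k then G i k i0 k0 else 0))).
 - rewrite D2_plus. rewrite D2_pick by auto.
   rewrite (D2_ext h B (fun i k => if T i k then G i k i0 k0 else 0) (fun i k => if T i k then G i0 k0 i k else 0)). ring.
   intros. unfold G. rewrite Gf_sym; auto.
 - intros i k Hi' Hk'. rewrite <- D2_minus.
   rewrite <- (D2_pick h B (fun i' k' => if T i k then G i k i' k' else 0) i0 k0) by auto.
   rewrite <- D2_ifc. rewrite <- D2_plus. apply D2_ext. intros i' k' _ _. unfold rem.
   destruct (Nat.eqb i i0) eqn:E1; destruct (Nat.eqb k k0) eqn:E2; destruct (Nat.eqb i' i0) eqn:E3; destruct (Nat.eqb k' k0) eqn:E4; simpl;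
   repeat rewrite andb_true_r; repeat rewrite andb_false_r;
   try (apply Nat.eqb_eq in E1); try (apply Nat.eqb_eq in E2); try (apply Nat.eqb_eq in E3); try (apply Nat.eqb_eq in E4); subst;
   try rewrite HT; simpl; try rewrite Hirr;
   repeat match goal with |- context [T ?x ?y] => destruct (T x y) end; simpl; ring. Qed.

Lemma condv_zero n h d adjH L a e T i k : a i k = 0%nat -> condv n h d adjH L a e T i k.
Proof. intros Ha. unfold condv. rewrite Ha. simpl Nat.eqb. apply Rle_ge. right. symmetry. apply rsum_zero. intros. apply rsum_zero. intros.
 destruct (_ && _); auto. simpl INR. unfold Rdiv. ring. Qed.

Lemma removal n h d adjH L B a e :
 (1 <= n)%nat -> (2 <= d)%nat -> d_regular h d adjH -> 0 < L ->
 (forall i k i' k', gadj n h d adjH i k i' k' = true -> e i k i' k' = e i' k' i k /\ (e i k i' k' <= Nat.min (a i k) (a i' k'))%nat) ->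
 (forall i k, (i < h)%nat -> (k < B)%nat -> INR (a i k) <= INR n) ->
 forall N (T : nat -> nat -> bool), (forall i k, T i k = true -> (i < h)%nat /\ (k < B)%nat) -> cnt h B T <= INR N ->
 exists S : nat -> nat -> bool, (forall i k, S i k = true -> T i k = true) /\
   (forall i k, (i < h)%nat -> S i k = true -> condv n h d adjH L a e S i k) /\
   Rabs (/ 2 * Yf n h d adjH B a e T - / 2 * Yf n h d adjH B a e S) <= FT n h d B adjH L a T - FT n h d B adjH L a S.
Proof. intros Hn Hd HH HL Hpe HaN N. induction N as [|N IH]; intros T Hbox Hc;
 (destruct (classic (forall i k, (i < h)%nat -> T i k = true -> condv n h d adjH L a e T i k)) as [Hg|Hng];
  [ exists T; split; [auto|split; [auto|]]; rewrite Rminus_diag, Rabs_R0, Rminus_diag; lra | ]);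
 apply not_all_ex_not in Hng as [i0 Hng]; apply not_all_ex_not in Hng as [k0 Hng];
 apply imply_to_and in Hng as [Hi0 Hng]; apply imply_to_and in Hng as [HT0 Hnc];
 destruct (Hbox _ _ HT0) as [_ Hk0];
 assert (Hcnt: cnt h B T - cnt h B (rem T i0 k0) = 1) by (unfold cnt; apply (D2_rem h B T i0 k0 (fun _ _ => 1)); auto).
 - exfalso. assert (0 <= cnt h B (rem T i0 k0)) by (apply D2_nonneg; intros ii kk _ _; unfold cnt; cbv beta; destruct (rem T i0 k0 ii kk); lra). change (INR 0) with 0 in Hc. lra.
 - destruct (IH (rem T i0 k0)) as [S [HS1 [HS2 HS3]]].
   + intros i k Hr. unfold rem in Hr. apply andb_prop in Hr as [Hr _]. auto.
   + rewrite S_INR in Hc. lra.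
   + exists S. split; [|split; auto].
     { intros i k Hs. apply HS1 in Hs. unfold rem in Hs. apply andb_prop in Hs as [Hs _]. auto. }
     assert (Ha0: a i0 k0 <> 0%nat) by (intros Ha; apply Hnc; apply condv_zero; auto).
     pose proof (Y_rem n h d adjH B a e T i0 k0 Hn Hd HH (fun i k i' k' G => proj1 (Hpe i k i' k' G)) Hi0 Hk0 HT0) as HY.
     pose proof (D2_rem h B T i0 k0 (fv n h d B adjH L a) Hi0 Hk0 HT0) as HF. fold (FT n h d B adjH L a T) in HF. fold (FT n h d B adjH L a (rem T i0 k0)) in HF.
     pose proof (vertex_bound n h d adjH L B a e T i0 k0 Hn Hd HL Hbox (fun i' k' G => proj2 (Hpe i0 k0 i' k' G)) (HaN i0 k0 Hi0 Hk0) Hi0 Hk0 Ha0 Hnc) as HV.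
     pose proof (D2_abs h B (fun i' k' => if T i' k' then Gf n h d adjH a e i0 k0 i' k' else 0)) as HA.
     assert (E: Rabs (/ 2 * Yf n h d adjH B a e T - / 2 * Yf n h d adjH B a e (rem T i0 k0))
        = Rabs (D2 h B (fun i' k' => if T i' k' then Gf n h d adjH a e i0 k0 i' k' else 0))).
     { f_equal. replace (/ 2 * Yf n h d adjH B a e T - / 2 * Yf n h d adjH B a e (rem T i0 k0)) with (/2 * (Yf n h d adjH B a e T - Yf n h d adjH B a e (rem T i0 k0))) by ring.
       rewrite HY. field. }
     assert (Rabs (/ 2 * Yf n h d adjH B a e T - / 2 * Yf n h d adjH B a e S) <= Rabs (/ 2 * Yf n h d adjH B a e T - / 2 * Yf n h d adjH B a e (rem T i0 k0)) + Rabs (/ 2 * Yf n h d adjH B a e (rem T i0 k0) - / 2 * Yf n h d adjH B a e S)).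
     { replace (/ 2 * Yf n h d adjH B a e T - / 2 * Yf n h d adjH B a e S) with ((/ 2 * Yf n h d adjH B a e T - / 2 * Yf n h d adjH B a e (rem T i0 k0)) + (/ 2 * Yf n h d adjH B a e (rem T i0 k0) - / 2 * Yf n h d adjH B a e S)) by ring.
       apply Rabs_triang. }
     lra. Qed.

Lemma amgm x y : 0 <= x -> 0 <= y -> sqrt (x * y) <= (x + y) / 2.
Proof. intros. rewrite sqrt_mult by auto. pose proof (sqrt_sqrt x H). pose proof (sqrt_sqrt y H0).
 pose proof (pow2_ge_0 (sqrt x - sqrt y)). simpl in H3. nra. Qed.

Lemma sumZ n h B d adjH a : d_regular h d adjH ->
  rsum h (fun i => Zf n h B adjH a i) = INR d * rsum h (fun i => sR n h B a i).
Proof. intros [Hs [_ [_ Hdeg]]]. unfold Zf.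
 rewrite (rsum_swap h h (fun i i' => if adjH i i' then sR n h B a i' else 0)).
 rewrite <- rsum_scal. apply rsum_ext. intros i' Hi'.
 rewrite (rsum_ext h _ (fun i => sR n h B a i' * (if adjH i' i then 1 else 0))).
 rewrite rsum_scal, rsum_count, Hdeg by auto. ring.
 intros i _. rewrite Hs. destruct (adjH i' i); ring. Qed.

Lemma sR_nonneg n h B a i : 0 <= sR n h B a i.
Proof. unfold sR. apply rsum_nonneg. intros. apply Rmult_le_pos. apply pow2_ge_0. apply pos_INR. Qed.
Lemma Zf_nonneg n h B adjH a i : 0 <= Zf n h B adjH a i.
Proof. unfold Zf. apply rsum_nonneg. intros. destruct (adjH i j). apply sR_nonneg. lra. Qed.

Lemma global_bound n h d adjH L B a :
  (1 <= n)%nat -> (2 <= d)%nat -> (1 <= h)%nat -> d_regular h d adjH -> 20 <= L ->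
  (forall i k, (i < h)%nat -> (k < B)%nat -> INR (a i k) <= INR n) ->
  rsum h (fun i => sR n h B a i) <= 10 ->
  D2 h B (fv n h d B adjH L a) <= 150 * L * sqrt (INR d).
Proof. intros Hn Hd Hh HH HL HaN Hs10. unfold fv. rewrite D2_plus.
 set (N := INR n). assert (HN: 1 <= N) by (unfold N; apply (le_INR 1); lia).
 set (sd := sqrt (INR d)). assert (Hsd: 0 < sd) by (apply sqrtd_pos; auto).
 assert (Hsdd: sd * sd = INR d) by (apply sqrt_sqrt, pos_INR).
 set (c := L / 10).
 set (Ssum := rsum h (fun i => sR n h B a i)).
 assert (HS0: 0 <= Ssum) by (apply rsum_nonneg; intros; apply sR_nonneg).
 assert (P1: D2 h B (fun i k => 8 * c * sd * weight n h k ^ 2 * INR (a i k)) = 8 * c * sd * Ssum).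
 { rewrite (D2_ext h B _ (fun i k => (8 * c * sd) * (weight n h k ^ 2 * INR (a i k)))) by (intros; ring).
   rewrite D2_scal. reflexivity. }
 set (sg := sqrt (INR n * INR h)).
 assert (Hsg: 0 < sg) by (apply sqrt_lt_R0, Rmult_lt_0_compat; apply lt_0_INR; lia).
 assert (Hrow: forall i, (i < h)%nat -> rsum B (fun k => weight n h k * qf (INR (a i k) / N) ^ 3) <= 7 * sqrt (sR n h B a i / N)).
 { intros i Hi. unfold weight. fold sg. eapply Rle_trans. apply row_lemma; auto.
   intros k Hk. split. apply Rdiv_le_0_compat; [apply pos_INR| lra]. apply Rmult_le_reg_r with N. lra. unfold Rdiv. rewrite Rmult_assoc, Rinv_l by lra. rewrite Rmult_1_r, Rmult_1_l. apply HaN; auto.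
   right. f_equal. f_equal. unfold sR. unfold Rdiv at 3. rewrite Rmult_comm. rewrite <- rsum_scal. apply rsum_ext. intros. unfold weight. fold sg. unfold Rdiv. ring. }
 assert (P2: D2 h B (fun i k => weight n h k * (4 * exp 1 * sqrt c * qf (INR (a i k) / N) ^ 3 * sqrt (N * Zf n h B adjH a i)))
   <= 4 * exp 1 * sqrt c * (7 * sd * Ssum)).
 { unfold D2. rewrite (rsum_ext h _ (fun i => (4 * exp 1 * sqrt c) * (sqrt (N * Zf n h B adjH a i) * rsum B (fun k => weight n h k * qf (INR (a i k) / N) ^ 3)))).
   2:{ intros. rewrite <- rsum_scal, <- rsum_scal. apply rsum_ext. intros. ring. }
   rewrite rsum_scal. apply Rmult_le_compat_l. pose proof (sqrt_pos c). pose proof (exp_pos 1). nra.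
   apply Rle_trans with (rsum h (fun i => 7 / 2 * (Zf n h B adjH a i / sd + sd * sR n h B a i))).
   - apply rsum_le. intros i Hi. apply Rle_trans with (sqrt (N * Zf n h B adjH a i) * (7 * sqrt (sR n h B a i / N))).
     apply Rmult_le_compat_l. apply sqrt_pos. auto.
     pose proof (Zf_nonneg n h B adjH a i). pose proof (sR_nonneg n h B a i).
     replace (sqrt (N * Zf n h B adjH a i) * (7 * sqrt (sR n h B a i / N))) with (7 * sqrt (Zf n h B adjH a i / sd * (sd * sR n h B a i))).
     pose proof (amgm (Zf n h B adjH a i / sd) (sd * sR n h B a i) ltac:(apply Rdiv_le_0_compat; lra) ltac:(nra)). lra.
     replace (Zf n h B adjH a i / sd * (sd * sR n h B a i)) with ((N * Zf n h B adjH a i) * (sR n h B a i / N)) by (field; lra).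
     rewrite sqrt_mult. ring. nra. apply Rdiv_le_0_compat; lra.
   - rewrite rsum_scal, rsum_plus. rewrite (rsum_ext h (fun i => Zf n h B adjH a i / sd) (fun i => / sd * Zf n h B adjH a i)) by (intros; unfold Rdiv; ring).
     rewrite rsum_scal, rsum_scal. pose proof (sumZ n h B d adjH a HH) as HZ. fold Ssum in HZ.
     assert (E1: rsum h (Zf n h B adjH a) = INR d * Ssum) by exact HZ.
     assert (E2: rsum h (sR n h B a) = Ssum) by reflexivity.
     rewrite E1, E2. rewrite <- Hsdd. right. field. lra. }
 rewrite P1. assert (HS10: Ssum <= 10) by exact Hs10.
 assert (Hc: sqrt c <= L / 14). { rewrite <- (sqrt_square (L/14)) by lra. apply sqrt_le_1_alt. unfold c. nra. }
 pose proof exp_le_3. pose proof (exp_pos 1). pose proof (sqrt_pos c).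
 assert (4 * exp 1 * sqrt c * (7 * sd * Ssum) <= 4 * 3 * (L/14) * (7 * sd * 10)).
 { apply Rmult_le_compat. nra. nra. apply Rmult_le_compat; lra. apply Rmult_le_compat_l; lra. }
 assert (8 * c * sd * Ssum <= 8 * c * sd * 10) by (apply Rmult_le_compat_l; unfold c; nra).
 unfold c in *. nra. Qed.

Lemma rsum_const1 m : rsum m (fun _ => 1) = INR m.
Proof. induction m; simpl rsum; [simpl; lra|]. rewrite IHm, S_INR. lra. Qed.

Lemma fv_nonneg n h d B adjH L a i k : (1 <= n)%nat -> (1 <= h)%nat -> 0 <= L -> 0 <= fv n h d B adjH L a i k.
Proof. intros Hn Hh HL. unfold fv. pose proof (weight_pos n h k Hn Hh). pose proof (sqrt_pos (INR d)). pose proof (pos_INR (a i k)).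
 pose proof (exp_pos 1). pose proof (sqrt_pos (L/10)). pose proof (sqrt_pos (INR n * Zf n h B adjH a i)).
 assert (0 <= qf (INR (a i k) / INR n)) by (unfold qf; apply sqrt_pos).
 assert (0 <= qf (INR (a i k) / INR n) ^ 3) by (apply pow_le; auto).
 assert (0 <= weight n h k ^ 2) by apply pow2_ge_0.
 set (w := weight n h k) in *. set (q := qf (INR (a i k) / INR n)) in *. set (z := sqrt (INR n * Zf n h B adjH a i)) in *. clearbody w q z.
 apply Rplus_le_le_0_compat; repeat apply Rmult_le_pos; lra. Qed.

Theorem proposition6p3 (n h d : nat) (adjH : nat -> nat -> bool) (L : R)
  (Hn : (1 <= n)%nat) (Hd : (2 <= d)%nat) (HH : d_regular h d adjH)
  (HL : 20 <= L)
  (k0 : nat) (a : nat -> nat -> nat) (e : nat -> nat -> nat -> nat -> nat)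
  (Hpat : is_pattern n h d adjH k0 a e) :
  exists S : nat -> nat -> bool,
    potency n h d adjH (k0 + d + 1) (sub_a S a) (sub_e S e)
      >= potency n h d adjH (k0 + d + 1) a e - 150 * L * sqrt (INR d) /\
    forall i k, (i < h)%nat -> S i k = true ->
      rsum h (fun i' => rsum (k + d + 1) (fun k' =>
        if gadj n h d adjH i k i' k' && S i' k' then
          INR (a i k) * INR (a i' k') / INR n * bfun (eps n a e i k i' k')
        else 0))
      >= (if Nat.eqb (a i k) 0 then 0
          else L / 10 * INR (a i k) * ln (exp 1 * INR n / INR (a i k))).
Proof.
 destruct Hpat as [_ [_ [Hrow [Hmass Hpe]]]].
 set (B := (k0 + d + 1)%nat) in *.
 destruct (Nat.eq_dec h 0) as [H0|Hh].
 { subst h. exists (fun _ _ => false). split. unfold potency. simpl. rewrite Rmult_0_r, Rabs_R0.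
   pose proof (sqrt_pos (INR d)). nra. intros. lia. }
 assert (Hh1: (1 <= h)%nat) by lia.
 assert (HaN: forall i k, (i < h)%nat -> (k < B)%nat -> INR (a i k) <= INR n).
 { intros i k Hi Hk. eapply Rle_trans; [|apply (Hrow i Hi)]. apply (rsum_single_le B (fun k => INR (a i k))); auto. intros; apply pos_INR. }
 set (T0 := fun i k => Nat.ltb i h && Nat.ltb k B).
 assert (Hbox: forall i k, T0 i k = true -> (i < h)%nat /\ (k < B)%nat).
 { intros i k HT. unfold T0 in HT. apply andb_prop in HT as [H1 H2]. apply Nat.ltb_lt in H1, H2. auto. }
 assert (HT0: forall i k, (i < h)%nat -> (k < B)%nat -> T0 i k = true).
 { intros. unfold T0. apply andb_true_intro. split; apply Nat.ltb_lt; auto. }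
 assert (Hcnt: cnt h B T0 <= INR (h * B)).
 { unfold cnt. apply Rle_trans with (D2 h B (fun _ _ => 1)). apply D2_le. intros. destruct (T0 i k); lra.
   unfold D2. rewrite (rsum_ext h _ (fun _ => INR B)) by (intros; apply rsum_const1). rewrite mult_INR.
   rewrite (rsum_ext h (fun _ => INR B) (fun _ => INR B * 1)) by (intros; ring). rewrite rsum_scal, rsum_const1. lra. }
 destruct (removal n h d adjH L B a e Hn Hd HH ltac:(lra) Hpe HaN (h * B) T0 Hbox Hcnt) as [S [HS1 [HS2 HS3]]].
 exists S. split.
 2:{ intros i k Hi HS. exact (HS2 i k Hi HS). }
 assert (EP1: potency n h d adjH B a e = Rabs (/ 2 * Yf n h d adjH B a e T0)).
 { unfold potency, Yf, D2. f_equal. f_equal. apply rsum_ext. intros i Hi. apply rsum_ext. intros k Hk. apply rsum_ext. intros i' Hi'. apply rsum_ext. intros k' Hk'.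
   rewrite (HT0 i k), (HT0 i' k') by auto. simpl. unfold Gf. auto. }
 assert (EP2: potency n h d adjH B (sub_a S a) (sub_e S e) = Rabs (/ 2 * Yf n h d adjH B a e S)).
 { unfold potency, Yf, D2. f_equal. f_equal. apply rsum_ext. intros i Hi. apply rsum_ext. intros k Hk. apply rsum_ext. intros i' Hi'. apply rsum_ext. intros k' Hk'.
   unfold sub_a, sub_e, Gf. destruct (S i k); destruct (S i' k'); simpl; auto; destruct (gadj _ _ _ _ _ _ _ _); auto; simpl; unfold Rdiv; ring. }
 rewrite EP1, EP2.
 assert (HFS: 0 <= FT n h d B adjH L a S).
 { apply D2_nonneg. intros. destruct (S i k). apply fv_nonneg; auto; lra. lra. }
 assert (HF0: FT n h d B adjH L a T0 <= 150 * L * sqrt (INR d)).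
 { unfold FT. rewrite (D2_ext h B _ (fv n h d B adjH L a)). apply global_bound; auto.
   intros. rewrite HT0; auto. }
 pose proof (Rabs_triang_inv (/ 2 * Yf n h d adjH B a e T0) (/ 2 * Yf n h d adjH B a e T0 - / 2 * Yf n h d adjH B a e S)).
 replace (/ 2 * Yf n h d adjH B a e T0 - (/ 2 * Yf n h d adjH B a e T0 - / 2 * Yf n h d adjH B a e S)) with (/ 2 * Yf n h d adjH B a e S) in H by ring.
 lra.
Qed.
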